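(* Let $q$ be a prime power and let $m,r,k,\alpha$ be positive integers. If $(\Sigma,\mathcal{A})$ with $\Sigma=\mathrm{PG}(m-1,q)$ is an $(m;\,r+1,\,k,\,r,\,\alpha,\,1)$-functional repair code, then $$m\le \sum_{i=1}^{k}\min\bigl(\alpha,\,(r-k)+i\bigr).$$
   Context: Dimensions are projective: a $(d-1)$-dimensional subspace of $\mathrm{PG}(m-1,q)$ corresponds to a $d$-dimensional subspace of $\mathbb{F}_q^m$, and $\langle\cdot\rangle$ denotes span. A subspace $U'$ of $\Sigma=\mathrm{PG}(m-1,q)$ is obtained from a set $\mathcal{U}$ of subspaces of $\Sigma$ by $(r,\beta)$-repair if there are $r$ distinct members $U_{i_1},\dots,U_{i_r}$ of $\mathcal{U}$ and, for each $j$, a $(\beta-1)$-dimensional subspace $W_{i_j}\subseteq U_{i_j}$ such that $U'\subseteq\langle W_{i_1},\dots,W_{i_r}\rangle$. An $(m;n,k,r,\alpha,\beta)$-functional repair code is a pair $(\Sigma,\mathcal{A})$ where $\Sigma=\mathrm{PG}(m-1,q)$ and $\mathcal{A}$ is a collection of $(n-1)$-sets of $(\alpha-1)$-dimensional subspaces of $\Sigma$ such that: (Recovery) every $\mathcal{U}\in\mathcal{A}$ contains $k$ members whose span is $\Sigma$; (Repair) for every $\mathcal{U}=\{U_1,\dots,U_{n-1}\}\in\mathcal{A}$ there is an $(\alpha-1)$-dimensional subspace $U_n$ obtained from $\mathcal{U}$ by $(r,\beta)$-repair such that $\mathcal{U}\cup\{U_n\}\setminus\{U_i\}\in\mathcal{A}$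 for every $i=1,\dots,n-1$. Standing assumptions: $m,n\ge2$, $1\le k<n$, $k\le r\le n-1$, $1\le\alpha\le m-1$, $1\le\beta\le\alpha$. *)

(* Defs.v *)
From HB Require Import structures.
From mathcomp Require Import all_boot all_order all_algebra all_field.
From mathcomp Require Import finmap.
Set Implicit Arguments. Unset Strict Implicit. Unset Printing Implicit Defensive.
Import GRing.Theory.
Local Open Scope fset_scope.

(* Sigma = PG(m-1,q) is modelled by the vector space V = F^m ('rV[F]_m) over a
   finite field F (q = #|F|); a projective (d-1)-subspace is a d-dimensional
   vector subspace {vspace V}; span <.> is the sum of subspaces. *)

Definition repair_from (F : fieldType) (V : vectType F) (r beta : nat)
    (U : {fset {vspace V}}) (U' : {vspace V}) : Prop :=
  exists (S : {fset {vspace V}}) (W : {vspace V} -> {vspace V}),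
    [/\ S `<=` U, #|` S| = r,
        (forall X, X \in S -> (W X <= X)%VS /\ \dim (W X) = beta)
      & (U' <= \sum_(X <- S) W X)%VS].

Definition functional_repair_code (F : finFieldType) (m n k r alpha beta : nat)
    (A : {fset {vspace 'rV[F]_m}} -> Prop) : Prop :=
  (forall U, A U -> #|` U| = n.-1 /\ (forall X, X \in U -> \dim X = alpha)) /\
  (forall U, A U -> exists S : {fset {vspace 'rV[F]_m}},
      [/\ S `<=` U, #|` S| = k & (\sum_(X <- S) X)%VS = fullv]) /\
  (forall U, A U -> exists Un : {vspace 'rV[F]_m},
      [/\ \dim Un = alpha, repair_from r beta U Un
        & forall Ui, Ui \in U -> A ((Un |` U) `\ Ui)]).

Arguments functional_repair_code {F} m n k r alpha beta A.

(* Main.v *)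
Require Import Defs.
From HB Require Import structures.
From mathcomp Require Import all_boot all_order all_algebra all_field.
From mathcomp Require Import finmap.
From mathcomp Require Import zify.
Import GRing.Theory.
Local Open Scope fset_scope.

Lemma sumv_le_seq (K : fieldType) (vT : vectType K) (I : eqType) (s : seq I)
   (f : I -> {vspace vT}) (V : {vspace vT}) :
  (forall i, i \in s -> (f i <= V)%VS) -> (\sum_(i <- s) f i <= V)%VS.
Proof.
elim: s => [|a s IH] H; first by rewrite big_nil sub0v.
rewrite big_cons subv_add H ?mem_head //= IH // => i Hi.
by apply: H; rewrite in_cons Hi orbT.
Qed.

Lemma sumv_ge_seq (K : fieldType) (vT : vectType K) (I : eqType) (s : seq I)
   (f : I -> {vspace vT}) (U : {vspace vT}) i :
  i \in s -> (U <= f i)%VS -> (U <= \sum_(j <- s) f j)%VS.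
Proof.
elim: s => [|a s IH] //; rewrite in_cons big_cons => /orP [/eqP -> | Hi] HU.
  exact: subv_trans HU (addvSl _ _).
exact: subv_trans (IH Hi HU) (addvSr _ _).
Qed.

Lemma dim_sum_seq (K : fieldType) (vT : vectType K) (I : eqType) (s : seq I)
   (f : I -> {vspace vT}) :
  (forall i, i \in s -> \dim (f i) <= 1)%N -> (\dim (\sum_(i <- s) f i) <= size s)%N.
Proof.
elim: s => [|a s IH] H; first by rewrite big_nil dim_vline eqxx.
rewrite big_cons /=.
apply: leq_trans (dimv_add_leqif _ _) _.
rewrite -add1n leq_add ?H ?mem_head // IH // => i Hi.
by apply: H; rewrite in_cons Hi orbT.
Qed.

Definition gfun (alpha r s : nat) := (\sum_(t < s) minn alpha (r - t))%N.

Lemma gfunS alpha r s : gfun alpha r s.+1 = (gfun alpha r s + minn alpha (r - s))%N.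
Proof. by rewrite /gfun big_ord_recr. Qed.

Lemma gfun_eq alpha r k : (k <= r)%N ->
  gfun alpha r k = (\sum_(1 <= i < k.+1) minn alpha (r - k + i))%N.
Proof.
elim: k => [|k IH] Hk; first by rewrite /gfun big_ord0 big_geq.
rewrite gfunS IH ?(ltnW Hk) // [in RHS](big_nat_recl k.+1) // [in RHS]addnC; congr (_ + _)%N.
  by apply: eq_big_nat => i /andP [Hi1 Hi2]; congr minn; lia.
by congr minn; lia.
Qed.

Theorem mainTheorem1 (F : finFieldType) (m r k alpha : nat)
    (A : {fset {vspace 'rV[F]_m}} -> Prop) :
  (* standing assumptions, with n = r + 1 and beta = 1 *)
  (2 <= m)%N -> (1 <= k)%N -> (k <= r)%N -> (1 <= alpha)%N -> (alpha <= m.-1)%N ->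
  (* the code is a nonempty collection *)
  (exists U, A U) ->
  functional_repair_code m r.+1 k r alpha 1 A ->
  (m <= \sum_(1 <= i < k.+1) minn alpha (r - k + i))%N.
Proof.
move=> Hm Hk Hkr Ha1 Ham [U0 HU0] [Hsz [Hrec Hrep]].
pose Inv (U G : {fset {vspace 'rV[F]_m}}) :=
  [/\ A U, G `<=` U & forall S, S `<=` G ->
      (\dim (\sum_(X <- S) X) <= gfun alpha r #|` S|)%N].
have step : forall j, (j <= r)%N -> exists U G, Inv U G /\ #|` G| = j.
  elim=> [|j IH] Hj.
    exists U0, fset0; split=> //; split=> //; rewrite ?fsub0set //.
    move=> S; rewrite fsubset0 => /eqP ->.
    by rewrite big_seq_fset0 dim_vline eqxx.
  have [U [G [[HU HGU Hb] HG]]] := IH (ltnW Hj).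
  have [HUc HUd] := Hsz U HU; rewrite /= in HUc.
  have [Un [HdUn [S0 [W [HS0U HS0c HW HUnS]]] HA]] := Hrep U HU.
  have HS0 : S0 = U.
    by apply/eqP; rewrite eqEfcard HS0U HS0c HUc leqnn.
  subst S0.
  have [Ui HUi] : exists Ui, Ui \in U `\` G.
    apply/fset0Pn; apply/negP => /eqP H0.
    have : U `<=` G.
      apply/fsubsetP => x Hx; apply/negPn/negP => HxG.
      by have := in_fset0 x; rewrite -H0 in_fsetD HxG Hx.
    move/fsubset_leq_card; rewrite HUc HG; lia.
  move: HUi; rewrite in_fsetD => /andP [HUiG HUiU].
  have HUnU : Un \notin U.
    apply/negP => HUnU.
    have [H1 _] := Hsz _ (HA Ui HUiU); rewrite /= in H1.
    have := cardfsD1 Ui (Un |` U).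
    rewrite H1 cardfsU1 HUnU HUc in_fset1U HUiU orbT /=; lia.
  have HUnG : Un \notin G.
    by apply/negP => /(fsubsetP HGU); apply/negP.
  exists ((Un |` U) `\ Ui), (Un |` G); split; last first.
    by rewrite cardfsU1 HUnG HG.
  split; first exact: HA.
    apply/fsubsetP => x; rewrite in_fset1U in_fsetD1 in_fset1U => /orP [/eqP -> | HxG].
      by rewrite eqxx andbT; apply/negP => /eqP E; move: HUnU; rewrite E HUiU.
    rewrite (fsubsetP HGU _ HxG) orbT andbT.
    by apply/negP => /eqP E; move: HUiG; rewrite -E HxG.
  move=> S HS.
  case HUnS': (Un \in S); last first.
    apply: Hb; apply/fsubsetP => x Hx.
    move: (fsubsetP HS x Hx); rewrite in_fset1U => /orP [/eqP E|] //.
    by move: HUnS'; rewrite -E Hx.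
  set S' := S `\ Un.
  have HS'G : S' `<=` G.
    apply/fsubsetP => x; rewrite in_fsetD1 => /andP [Hx1 Hx2].
    by move: (fsubsetP HS x Hx2); rewrite in_fset1U (negPf Hx1).
  have HS'U : S' `<=` U := fsubset_trans HS'G HGU.
  rewrite (big_fsetD1 Un HUnS') (cardfsD1 Un S) HUnS' add1n gfunS -/S'.
  set T := (\sum_(X <- S') X)%VS.
  set W' := (\sum_(X <- U `\` S') W X)%VS.
  apply: (@leq_trans (\dim T + minn alpha (r - #|` S'|))); last first.
    by rewrite leq_add2r Hb.
  rewrite addn_minr leq_min; apply/andP; split.
    by apply: leq_trans (dimv_add_leqif _ _) _; rewrite HdUn addnC.
  have Hsub : (Un + T <= T + W')%VS.
    rewrite subv_add addvSl andbT.
    apply: subv_trans HUnS _; apply: sumv_le_seq => X HX.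
    case HXS: (X \in S').
      apply: subv_trans (addvSl _ _).
      by apply: sumv_ge_seq HXS _; have [] := HW X HX.
    apply: subv_trans (addvSr _ _).
    by apply: (@sumv_ge_seq _ _ _ _ _ _ X); rewrite // in_fsetD HXS HX.
  apply: leq_trans (dimvS Hsub) _.
  apply: leq_trans (dimv_add_leqif _ _) _.
  rewrite leq_add2l -HUc -(cardfsDS HS'U).
  apply: dim_sum_seq => X; rewrite in_fsetD => /andP [_ HX].
  by have [_ ->] := HW X HX.
have [U [G [[HU HGU Hb] HG]]] := step r (leqnn r).
have [HUc _] := Hsz U HU; rewrite /= in HUc.
have HGeq : G = U by apply/eqP; rewrite eqEfcard HGU HUc HG leqnn.
subst G.
have [S [HSU HSc HSf]] := Hrec U HU.
have := Hb S HSU; rewrite HSf dimvf dim_matrix mul1r HSc gfun_eq //.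
Qed.
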